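(* Let $\ell,m$ be positive integers and let $\mu\in\mathcal{P}^{\ell,\ell+m-1}$. Define $\tilde\mu:[\ell]\to[\ell]$ by $\tilde\mu(i)=t(i,\mu(i))$, where $t(r,s)=s$ if $s<r$, $t(r,s)=r$ if $r\leq s\leq m+r-1$, and $t(r,s)=s-m+1$ if $s>m+r-1$. Then $\mu\in\mathcal{P}^\ell(\Omega_m)$ if and only if for every $i\in[\ell]$: (i) if $\tilde\mu(i)>i$ then $\tilde\mu(\tilde\mu(i))>i$; (ii) if $\tilde\mu(i)<i$ then $\tilde\mu(\tilde\mu(i))<i$.
   Context: For a positive integer $n$, $[n]=\{1,\dots,n\}$. $\mathcal{P}^{n,k}$ is the set of partitions $\mu=(\mu_1\geq\dots\geq\mu_n>0)$ with exactly $n$ parts and $\mu_1\leq k$, regarded as weakly decreasing functions $[n]\to[k]$, $\mu(i)=\mu_i$. The map $\tau_k:\mathcal{P}^{n,k}\to\mathcal{P}^{n,k}$ is $\tau_k(\mu_1,\dots,\mu_n)=(k+1-\mu_n,\dots,k+1-\mu_1)$. For $\mu$ with $n-1$ parts and $0<j\leq\mu_{n-1}$, $(\mu:j)$ denotes the partition $(\mu_1,\dots,\mu_{n-1},j)$. Fix $m\in\mathbb{Z}^+$ and let $\Omega_m=\{(j):1\leq j\leq m\}=\mathcal{P}^{1,m}$. Define $\mathcal{P}^1(\Omega_m)=\Omega_m$ and, for $\ell\geq2$, $\mathcal{P}^\ell_{\rm d}(\Omega_m)=\{(\nu:j)\in\mathcal{P}^{\ell,\ell+m-1}:\nu\in\mathcal{P}^{\ell-1}(\Omega_m),\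 1\leq j\leq\nu_{\ell-1}\}$ and $\mathcal{P}^\ell(\Omega_m)=\mathcal{P}^\ell_{\rm d}(\Omega_m)\cup\tau_{\ell+m-1}(\mathcal{P}^\ell_{\rm d}(\Omega_m))$. *)

(* Defs.v *)
(* Partitions are represented as seq nat (mu = [:: mu_1; ...; mu_n]). *)
From mathcomp Require Import all_boot.
Set Implicit Arguments. Unset Strict Implicit. Unset Printing Implicit Defensive.

Definition isPart (n k : nat) (mu : seq nat) : Prop :=
  size mu = n /\ sorted geq mu /\ all (fun x => (0 < x) && (x <= k)) mu.

Definition tau (k : nat) (mu : seq nat) : seq nat :=
  rev (map (fun x => k.+1 - x) mu).

(* P^l_d built from a predicate P describing P^{l-1}(Omega_m):
   {(nu:j) in P^{l,l+m-1} : nu in P^{l-1}(Omega_m), 1 <= j <= nu_{l-1}} *)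
Definition Pd_step (P : seq nat -> Prop) (m l : nat) (mu : seq nat) : Prop :=
  exists (nu : seq nat) (j : nat),
    P nu /\ mu = rcons nu j /\ 1 <= j <= last 0 nu /\ isPart l (l + m - 1) mu.

Fixpoint inPOmega (m l : nat) (mu : seq nat) {struct l} : Prop :=
  match l with
  | 0 => False
  | l'.+1 =>
      if l' == 0 then exists j, mu = [:: j] /\ 1 <= j <= m
      else Pd_step (inPOmega m l') m l mu
           \/ exists x, Pd_step (inPOmega m l') m l x /\ mu = tau (l + m - 1) x
  end.

Definition tfun (m r s : nat) : nat :=
  if s < r then s else if s <= m + r - 1 then r else s - m + 1.

(* mu~(i) = t(i, mu(i)), with mu(i) = mu_i (1-indexed) *)
Definition mutilde (m : nat) (mu : seq nat) (i : nat) : nat :=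
  tfun m i (nth 0 mu i.-1).

(* Main.v *)
Require Import Defs.
From mathcomp Require Import all_boot zify.
Set Implicit Arguments. Unset Strict Implicit.

Definition Cond m l mu := forall i, 1 <= i <= l ->
     (mutilde m mu i > i -> mutilde m mu (mutilde m mu i) > i) /\
     (mutilde m mu i < i -> mutilde m mu (mutilde m mu i) < i).

Lemma tfun_range m L r s : 0 < m -> 1 <= r <= L -> 1 <= s <= L + m - 1 ->
  1 <= tfun m r s <= L.
Proof. move=> *; rewrite /tfun; do ! case: ifP => ?; lia. Qed.

Lemma part_nth l k mu i : isPart l k mu -> i < l -> 0 < nth 0 mu i <= k.
Proof.
case=> Hs [_ /(all_nthP 0) Ha] Hi.
by have := Ha i; rewrite Hs => /(_ Hi).
Qed.

Lemma mut_range l m mu i : 0 < m -> isPart l (l + m - 1) mu -> 1 <= i <= l ->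
  1 <= mutilde m mu i <= l.
Proof.
move=> Hm Hp Hi; rewrite /mutilde; apply: tfun_range => //.
have := @part_nth _ _ _ i.-1 Hp ltac:(lia); lia.
Qed.

Lemma nth_tau k mu n : n < size mu ->
  nth 0 (tau k mu) n = k.+1 - nth 0 mu (size mu - n.+1).
Proof.
move=> Hn; rewrite /tau nth_rev size_map // (nth_map 0) //; lia.
Qed.

Lemma tau_isPart l k mu : isPart l k mu -> isPart l k (tau k mu).
Proof.
case=> Hs [Hso Ha]; split; first by rewrite /tau size_rev size_map.
split.
  rewrite /tau rev_sorted.
  case: mu Hso {Hs Ha} => //= a s.
  elim: s a => //= b s IH a /andP [Hab Hp]; rewrite IH // andbT; lia.
rewrite /tau all_rev all_map; apply/allP => x Hx /=.
have := allP Ha x Hx; lia.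
Qed.

Lemma tau_tau l k mu : isPart l k mu -> tau k (tau k mu) = mu.
Proof.
case=> _ [_ Ha]; rewrite /tau map_rev revK -map_comp -[RHS]map_id.
apply/eq_in_map => x Hx /=; have := allP Ha x Hx; lia.
Qed.

Lemma mut_tau l m mu i : 0 < m -> isPart l (l + m - 1) mu -> 1 <= i <= l ->
  mutilde m (tau (l + m - 1) mu) i = l.+1 - mutilde m mu (l.+1 - i).
Proof.
move=> Hm Hp Hi; have Hs : size mu = l by case: Hp.
rewrite /mutilde nth_tau; last lia.
have -> : size mu - (i.-1).+1 = (l.+1 - i).-1 by lia.
have := @part_nth _ _ _ (l.+1 - i).-1 Hp ltac:(lia).
move: (nth 0 mu (l.+1 - i).-1) => s Hs'.
rewrite /tfun; do ! case: ifP => ?; lia.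
Qed.

Lemma Cond_tau l m mu : 0 < m -> isPart l (l + m - 1) mu -> Cond m l mu ->
  Cond m l (tau (l + m - 1) mu).
Proof.
move=> Hm Hp HC i Hi.
have Hi' : 1 <= l.+1 - i <= l by lia.
have R1 := mut_range Hm Hp Hi'.
rewrite (mut_tau Hm Hp Hi) (mut_tau Hm Hp); last lia.
have -> : l.+1 - (l.+1 - mutilde m mu (l.+1 - i)) = mutilde m mu (l.+1 - i) by lia.
have := HC _ Hi'; lia.
Qed.

Lemma mut_rcons m nu j i : 1 <= i <= size nu ->
  mutilde m (rcons nu j) i = mutilde m nu i.
Proof. move=> Hi; rewrite /mutilde nth_rcons ifT //; lia. Qed.

Lemma mut_rcons_last m nu j :
  mutilde m (rcons nu j) (size nu).+1 = tfun m (size nu).+1 j.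
Proof. by rewrite /mutilde nth_rcons ltnn eqxx. Qed.

Lemma inP_part m l mu : 0 < l -> inPOmega m l mu -> isPart l (l + m - 1) mu.
Proof.
case: l => [|l] //= _; case: eqP => [->|_].
  case=> j [-> Hj]; split => //; split => //=; rewrite andbT; lia.
case=> [[nu [j [_ [_ [_ H]]]]] | [x [[nu [j [_ [_ [_ H]]]]] ->]]] //.
exact: tau_isPart.
Qed.

Lemma Pd_cond m l nu j : 0 < m -> 0 < l -> Cond m l nu ->
  isPart l (l + m - 1) nu -> 1 <= j <= last 0 nu -> Cond m l.+1 (rcons nu j).
Proof.
move=> Hm Hl HC Hp Hj i Hi.
have Hs : size nu = l by case: Hp.
case: (ltnP i l.+1) => Hil.
  rewrite mut_rcons; last lia.
  have R := mut_range Hm Hp (_ : 1 <= i <= l).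
  have {R} R := R ltac:(lia).
  rewrite mut_rcons; last lia.
  apply: HC; lia.
have -> : i = (size nu).+1 by lia.
rewrite mut_rcons_last.
have Hlast : last 0 nu <= l + m - 1.
  rewrite -nth_last Hs; have := @part_nth _ _ _ l.-1 Hp ltac:(lia); lia.
rewrite /tfun; case: ifP => Hj1.
  rewrite mut_rcons; last lia.
  have := mut_range Hm Hp (_ : 1 <= j <= l); move/(_ ltac:(lia)); lia.
case: ifP => Hj2; lia.
Qed.

Lemma forward m l mu : 0 < m -> 0 < l -> inPOmega m l mu -> Cond m l mu.
Proof.
move=> Hm; elim: l mu => [|l IH] mu //.
case: l IH => [|l] IH _ /=.
  case=> j [-> Hj] i Hi.
  have -> : i = 1 by lia.
  have E : mutilde m [:: j] 1 = 1.
    rewrite /mutilde /= /tfun; do ! case: ifP => ?; lia.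
  rewrite E; lia.
have HPd : forall x, Pd_step (inPOmega m l.+1) m l.+2 x -> Cond m l.+2 x.
  move=> x [nu [j [Hnu [-> [Hj _]]]]].
  apply: Pd_cond => //; first exact: IH.
  exact: inP_part.
case=> [H | [x [H ->]]]; first exact: HPd.
apply: Cond_tau => //; last exact: HPd.
by case: H => [nu [j [_ [_ [_ H]]]]].
Qed.

Lemma geq_trans : transitive geq.
Proof. move=> a b c /= ? ?; lia. Qed.

Lemma LemA m l (P : seq nat -> Prop) mu : 0 < m -> 0 < l ->
  (forall nu, isPart l (l + m - 1) nu -> Cond m l nu -> P nu) ->
  isPart l.+1 (l.+1 + m - 1) mu -> Cond m l.+1 mu -> nth 0 mu 0 < l + m ->
  Pd_step P m l.+1 mu.
Proof.
move=> Hm Hl IH Hp HC Hh.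
case/lastP: mu Hp HC Hh => [|nu j] Hp HC Hh; first by case: Hp.
have Hs : size nu = l by case: Hp => H _; move: H; rewrite size_rcons => -[].
case: nu Hs Hp HC Hh => [|a s] Hs Hp HC Hh; first by rewrite -Hs in Hl.
case: (Hp) => _ [Hso Ha].
move: Hso; rewrite /= rcons_path => /andP [Hso Hl2].
move: Ha; rewrite all_rcons => /andP [Hj Ha].
have Ha' := order_path_min geq_trans Hso.
have Hpn : isPart l (l + m - 1) (a :: s).
  split => //; split => //.
  move: Ha Ha' Hh => /= /andP [Ha0 Ha] Ha' Hh.
  apply/andP; split; first lia.
  apply/allP => x Hx; have := allP Ha x Hx; have := allP Ha' x Hx => /=; lia.
exists (a :: s), j; split; last split => //; last split => //.
  apply: IH => // i Hi.
  have R := mut_range Hm Hpn Hi.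
  have E1 := @mut_rcons m (a :: s) j i ltac:(simpl in *; lia).
  have E2 := @mut_rcons m (a :: s) j (mutilde m (a :: s) i) ltac:(simpl in *; lia).
  have := HC i ltac:(lia); rewrite E1 E2; done.
simpl in Hl2 |- *; lia.
Qed.

Lemma backward m l mu : 0 < m -> 0 < l -> isPart l (l + m - 1) mu ->
  Cond m l mu -> inPOmega m l mu.
Proof.
move=> Hm; elim: l mu => [|l IH] mu //.
case: l IH => [|l] IH _ Hp HC /=.
  case: Hp => Hs [_ Ha].
  case: mu Hs Ha HC => [|j [|]] //= _ Ha _.
  exists j; split => //; lia.
case: (ltnP (nth 0 mu 0) (l.+1 + m)) => H.
  left; apply: LemA => //; by move=> nu; apply: IH.
have Hs : size mu = l.+2 by case: Hp.
case: (ltnP 1 (nth 0 mu l.+1)) => H2.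
  right; exists (tau (l.+2 + m - 1) mu); split; last by rewrite (tau_tau Hp).
  apply: LemA => //; first by move=> nu; apply: IH.
  - exact: tau_isPart.
  - exact: Cond_tau.
  rewrite nth_tau Hs //; have -> : l.+2 - 1 = l.+1 by lia.
  lia.
exfalso.
have B0 := @part_nth _ _ _ 0 Hp ltac:(lia).
have B1 := @part_nth _ _ _ l.+1 Hp ltac:(lia).
have E1 : mutilde m mu 1 = l.+2.
  rewrite /mutilde /= /tfun; do ! case: ifP => ?; lia.
have E2 : mutilde m mu l.+2 = 1.
  rewrite /mutilde /= /tfun; do ! case: ifP => ?; lia.
have := HC 1 ltac:(lia); rewrite E1 E2; lia.
Qed.

Theorem theorem3p6 (l m : nat) (mu : seq nat) :
  0 < l -> 0 < m -> isPart l (l + m - 1) mu ->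
  (inPOmega m l mu <->
   forall i, 1 <= i <= l ->
     (mutilde m mu i > i -> mutilde m mu (mutilde m mu i) > i) /\
     (mutilde m mu i < i -> mutilde m mu (mutilde m mu i) < i)).
Proof.
move=> Hl Hm Hp; split; first exact: forward.
exact: backward.
Qed.
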